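(* Let $\mathcal{D}$ be a set of routing problem instances, and for each $\mathcal{P}\in\mathcal{D}$ let $C=C(\mathcal{P})\subseteq\Pi$ be its (finite, nonempty) feasible set, $f(\cdot;\mathcal{P})$ its objective, $f^*(\mathcal{P})=\min_{\pi\in C}f(\pi;\mathcal{P})$, $\Pi^*=\Pi^*(\mathcal{P})$ its set of optimal solutions, and $q_\lambda(\cdot;\mathcal{P})$ the constrained Gibbs distribution defined in the context. Suppose that for a parameterized family of distributions $\{p_\theta(\cdot;\mathcal{P})\}_\theta$ on $\Pi$ the approximation error $\delta(\lambda):=\min_\theta\max_{\mathcal{P}\in\mathcal{D}}\mathrm{KL}(p_\theta(\cdot;\mathcal{P})\,\|\,q_\lambda(\cdot;\mathcal{P}))$ satisfies $\delta(\lambda)\le c/\lambda$ for all $\lambda>0$, for some constant $c$, and let $\theta^*(\lambda)$ be a minimizer attaining $\delta(\lambda)$. Define $\Delta(\mathcal{P}):=\min_{\pi\in C\setminus\Pi^*}f(\pi;\mathcal{P})-f^*(\mathcal{P})$. Then for any $\mathcal{P}\in\mathcal{D}$, any $\epsilon>0$ and any $\lambda$ with $\Delta(\mathcal{P})\ge\lambda>0$, $$\mathbb{P}_{\pi\sim p_{\theta^*(\lambda)}(\cdot;\mathcal{P})}\big(f(\pi;\mathcal{P})\ge f^*(\mathcal{P})+\epsilon\big)\le \frac{|C|\,\Delta(\mathcal{P})\,e^{-\Delta(\mathcal{P})/\lambda}}{|\Pi^*|\max\{\epsilon,\Delta(\mathcal{P})\}}+\sqrt{\frac{c}{2\lamb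da}}.$$
   Context: Routes are elements of the finite set $\Pi=V^T$ with $V=\{0,1,\dots,n\}$. For an instance $\mathcal{P}$, the feasible set is $C=\{\pi\in\Pi: c(\pi;\mathcal{P})\le 0,\ d(\pi;\mathcal{P})=0\}$ for constraint functions $c,d$. The constrained Gibbs distribution with temperature $\lambda>0$ is $q_\lambda(\pi;\mathcal{P})=\frac{1}{Z_\lambda}\exp\!\big(-\frac{f(\pi;\mathcal{P})-f^*(\mathcal{P})}{\lambda}\big)\mathbf{1}_C(\pi)$, where $Z_\lambda=\sum_{\pi\in C}\exp(-(f(\pi;\mathcal{P})-f^*(\mathcal{P}))/\lambda)$. For distributions $P,Q$ on a finite set with $\mathrm{supp}(P)\subseteq\mathrm{supp}(Q)$, $\mathrm{KL}(P\|Q)=\mathbb{E}_{x\sim P}[\log(P(x)/Q(x))]$. *)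

(* Defs.v *)
From HB Require Import structures.
From mathcomp Require Import all_boot all_order all_algebra.
From mathcomp Require Import all_classical all_reals all_analysis.
Set Implicit Arguments. Unset Strict Implicit. Unset Printing Implicit Defensive.
Import Order.TTheory GRing.Theory Num.Theory.
Local Open Scope ring_scope.

Section Routing.
Variable R : realType.

Definition route (n T : nat) := {ffun 'I_T -> 'I_n.+1}.

Definition feasible (n T mc md : nat)
  (c : route n T -> 'rV[R]_mc) (d : route n T -> 'rV[R]_md) : {set route n T} :=
  [set pi | [forall i, c pi 0 i <= 0] && (d pi == 0)].

(* Minimum of f over a finite set A (0 by convention if A is empty). *)
Definition fmin (X : finType) (A : {set X}) (f : X -> R) : R :=
  if [pick x in A] is Some x0 then \big[Num.min/f x0]_(x in A) f x else 0.

Definition fstar (X : finType) (C : {set X}) (f : X -> R) : R := fmin C f.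

Definition optset (X : finType) (C : {set X}) (f : X -> R) : {set X} :=
  [set x in C | f x == fstar C f].

Definition gap (X : finType) (C : {set X}) (f : X -> R) : R :=
  fmin (C :\: optset C f) f - fstar C f.

Definition partfun (X : finType) (C : {set X}) (f : X -> R) (lam : R) : R :=
  \sum_(x in C) expR (- (f x - fstar C f) / lam).

Definition gibbs (X : finType) (C : {set X}) (f : X -> R) (lam : R) (x : X) : R :=
  if x \in C then expR (- (f x - fstar C f) / lam) / partfun C f lam else 0.

Definition is_distr (X : finType) (p : X -> R) : Prop :=
  (forall x, 0 <= p x) /\ \sum_(x : X) p x = 1.

Definition KL (X : finType) (p q : X -> R) : \bar R :=
  if [forall x, (p x != 0) ==> (q x != 0)]
  then (\sum_(x | p x != 0) p x * ln (p x / q x))%:E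
  else +oo%E.

End Routing.

(* Main.v *)
Require Import Defs.
From HB Require Import structures.
From mathcomp Require Import all_boot all_order all_algebra.
From mathcomp Require Import all_classical all_reals all_analysis.
From mathcomp Require Import ring lra.
Import Order.TTheory GRing.Theory Num.Theory.
Local Open Scope ring_scope.
Section H1.
Variable R : realType.

Lemma ln_le_sub1 (y : R) : 0 < y -> ln y <= y - 1.
Proof.
move=> y0; have := @le_ln1Dx R (y - 1).
rewrite addrCA subrr addr0; apply; lra.
Qed.

Lemma logsum (X : finType) (p q : X -> R) (S : pred X) :
  (forall x, 0 <= p x) -> (forall x, 0 <= q x) ->
  (forall x, p x != 0 -> q x != 0) ->
  (\sum_(x | S x) p x) * (ln (\sum_(x | S x) p x) - ln (\sum_(x | S x) q x))
  <= \sum_(x | (p x != 0) && S x) p x * ln (p x / q x).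
Proof.
move=> p0 q0 sup.
set a := \sum_(x | S x) p x; set b := \sum_(x | S x) q x.
have ea : a = \sum_(x | (p x != 0) && S x) p x.
  rewrite /a (bigID (fun x => p x != 0)) /= [X in _ + X]big1 ?addr0.
    by apply: eq_bigl => x; rewrite andbC.
  by move=> x /andP[_ /negbNE/eqP].
have a0 : 0 <= a by apply: sumr_ge0.
have [az|apos] := eqVneq a 0.
  rewrite az mul0r big_pred0 // => x; apply/negbTE; apply/negP => /andP[px Sx].
  have := (psumr_eq0P (fun i _ => p0 i) az) x Sx; by move/eqP: px.
have {apos} apos : 0 < a by rewrite lt_neqAle eq_sym apos.
have bpos : 0 < b.
  rewrite lt_neqAle sumr_ge0 ?andbT //; apply/negP => /eqP bz.
  have qz := psumr_eq0P (fun i _ => q0 i) (esym bz).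
  have : a = 0.
    rewrite /a big1 // => x Sx; apply/eqP; apply/negP => /negP px.
    by have := sup x px; rewrite qz // eqxx.
  by move=> az; rewrite az ltxx in apos.
have eb : \sum_(x | (p x != 0) && S x) q x <= b.
  rewrite /b (bigID (fun x => p x != 0) S) /=.
  rewrite [X in X <= _](eq_bigl (fun i => S i && (p i != 0))); last by move=> i; rewrite andbC.
  by rewrite lerDl sumr_ge0.
have key : forall x, (p x != 0) && S x ->
    p x - q x * (a / b) <= p x * ln (p x / q x) - p x * (ln a - ln b).
  move=> x /andP[px _].
  have pp : 0 < p x by rewrite lt_neqAle eq_sym px p0.
  have qp : 0 < q x by rewrite lt_neqAle eq_sym sup // q0.
  have h1 : ln (p x / q x) = ln (p x) - ln (q x) by rewrite ln_div ?posrE.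
  have h2 : ln (q x * a / (p x * b)) = ln (q x) + ln a - (ln (p x) + ln b).
    by rewrite ln_div ?posrE ?mulr_gt0 // !lnM ?posrE.
  have h3 := @ln_le_sub1 (q x * a / (p x * b)) (divr_gt0 (mulr_gt0 qp apos) (mulr_gt0 pp bpos)).
  have h4 : p x * (q x * a / (p x * b)) = q x * (a / b).
    by field; rewrite gt_eqF ?pp ?bpos.
  rewrite h1 -h4; rewrite h2 in h3.
  set y := q x * a / (p x * b) in h3 *.
  nra.
have -> : a * (ln a - ln b) = \sum_(x | (p x != 0) && S x) p x * (ln a - ln b).
  by rewrite {1}ea mulr_suml.
rewrite -subr_ge0 -sumrB.
apply: le_trans (ler_sum _ key).
rewrite sumrB -ea -mulr_suml subr_ge0.
apply: (@le_trans _ _ (b * (a / b))).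
  by rewrite ler_wpM2r // divr_ge0 // ltW.
by rewrite mulrC divfK // gt_eqF.
Qed.
End H1.

Section H2.
Variable R : realType.

Lemma nincr_open (f df : R -> R) (l u x y : R) :
  (forall z, l < z < u -> is_derive z 1 f (df z)) ->
  (forall z, x < z < y -> df z <= 0) ->
  l < x -> x <= y -> y < u -> f y <= f x.
Proof.
move=> hd hneg lx xy yu.
have dz : forall z, x <= z <= y -> derivable f z 1.
  move=> z /andP[xz zy]; have := hd z; rewrite (lt_le_trans lx xz) (le_lt_trans zy yu).
  by move=> /(_ isT) H; apply: ex_derive.
apply: (@ler0_derive1_le_cc R f x y).
- move=> z; rewrite in_itv /= => /andP[xz zy]; apply: dz; rewrite !ltW //.
- move=> z; rewrite in_itv /= => /andP[xz zy].
  have := hd z; rewrite (lt_trans lx xz) (lt_trans zy yu) => /(_ isT) H.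
  by rewrite derive1E derive_val; apply: hneg; rewrite xz zy.
- apply: derivable_within_continuous => z; rewrite in_itv /=; exact: dz.
- by rewrite in_itv /= lexx xy.
- by rewrite in_itv /= lexx xy.
- exact: xy.
Qed.

Lemma is_derive_ln1m (z : R) : z < 1 -> is_derive z 1 (fun x => ln (1 - x)) (- (1 - z)^-1).
Proof.
move=> z1.
have d1 : is_derive z 1 (fun x : R => 1 - x) (-1).
  have h : is_derive z 1 (cst (1:R) - id) (0 - 1) by apply: is_deriveB.
  by rewrite sub0r in h.
have d2 : is_derive (1 - z) 1 (@ln R) (1 - z)^-1 by apply: is_derive1_ln; lra.
have hd : derivable (fun x : R => ln (1 - x)) z 1.
  have := @differentiable_comp R _ _ _ (fun x : R => 1 - x) (@ln R) z.
  rewrite -!derivable1_diffP; apply; [exact: ex_derive | exact: ex_derive].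
apply: DeriveDef => //.
rewrite -derive1E (@derive1_comp R (fun x : R => 1 - x) (@ln R)) ?derive1E ?derive_val.
- by rewrite mulrN1.
- exact: ex_derive.
- exact: ex_derive.
Qed.

End H2.

Section H3.
Variable R : realType.

Lemma binpinsker (a b : R) : 0 < b -> b < a -> a <= 1 ->
  2 * (a - b) ^+ 2 <= a * (ln a - ln b) + (1 - a) * (ln (1 - a) - ln (1 - b)).
Proof.
move=> b0 ba a1.
have [a1'|ae] := ltP a 1; last first.
  have ae1 : a = 1 by apply/le_anti; rewrite a1 ae.
  subst a; rewrite subrr mul0r addr0 mul1r.
  set F := fun x : R => - ln x - 2 * (1 - x) ^+ 2.
  have hd : forall z : R, 0 < z < 2 -> is_derive z 1 F (- z^-1 + 4 * (1 - z)).
    move=> z /andP[z0 _].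
    have h1 : is_derive z 1 (@ln R) z^-1 := is_derive1_ln z0.
    have h2 : is_derive z 1 (- @ln R) (- z^-1) by apply: is_deriveN.
    have h3 : is_derive z 1 (cst 1 - id) (0 - 1) by apply: is_deriveB.
    have h4 : is_derive z 1 ((cst 1 - id) ^+ 2) (2%:R * (cst 1 - id) z ^+ 1 * (0 - 1)) by apply: is_deriveX.
    have h5 : is_derive z 1 ((2:R) *: ((cst 1 - id) ^+ 2 : R -> R)) (2 *: (2%:R * (cst 1 - id) z ^+ 1 * (0 - 1))) by apply: is_deriveZ.
    have h6 := is_deriveB h2 h5.
    apply: (is_derive_eq h6).
    rewrite /= expr1 sub0r mulrN1.
    have -> : forall x : R, (2:R) *: x = 2 * x by [].
    have -> : (cst 1 - id) z = 1 - z by [].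
    ring.
  have key : F 1 <= F b.
    apply: (@nincr_open R F _ 0 2 b 1 hd); [|exact: b0|exact: ltW|lra].
    move=> z /andP[bz z1].
    have z0 : 0 < z by lra.
    have -> : - z^-1 + 4 * (1 - z) = - ((1 - 2 * z) ^+ 2 / z).
      by field; rewrite gt_eqF.
    by rewrite oppr_le0 divr_ge0 ?sqr_ge0 // ltW.
  move: key; rewrite /F ln1 subrr expr0n /= mulr0 oppr0.
  lra.
set K := a * ln a + (1 - a) * ln (1 - a).
set F := fun x : R => K - a * ln x - (1 - a) * ln (1 - x) - 2 * (a - x) ^+ 2.
have hd : forall z : R, 0 < z < 1 ->
    is_derive z 1 F (- (a / z) + (1 - a) / (1 - z) + 4 * (a - z)).
  move=> z /andP[z0 z1].
  have h1 : is_derive z 1 (@ln R) z^-1 := is_derive1_ln z0.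
  have h2 : is_derive z 1 (a *: @ln R) (a *: z^-1) by apply: is_deriveZ.
  have h3 : is_derive z 1 (cst K - a *: @ln R) (0 - a *: z^-1) by apply: is_deriveB.
  have hl := @is_derive_ln1m R z z1.
  have h4 : is_derive z 1 ((1 - a) *: (fun x : R => ln (1 - x))) ((1 - a) *: - (1 - z)^-1)
    by apply: is_deriveZ.
  have h5 := is_deriveB h3 h4.
  have h6 : is_derive z 1 (cst a - id) (0 - 1) by apply: is_deriveB.
  have h7 : is_derive z 1 ((cst a - id) ^+ 2) (2%:R * (cst a - id) z ^+ 1 * (0 - 1)) by apply: is_deriveX.
  have h8 : is_derive z 1 ((2:R) *: ((cst a - id) ^+ 2 : R -> R)) (2 *: (2%:R * (cst a - id) z ^+ 1 * (0 - 1))) by apply: is_deriveZ.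
  have h9 := is_deriveB h5 h8.
  apply: (is_derive_eq h9).
  rewrite /= expr1.
  have sc : forall x y : R, x *: y = x * y by [].
  rewrite !sc.
  have -> : (cst a - id) z = a - z by [].
  rewrite /=. field. lra.
have key : F a <= F b.
  apply: (@nincr_open R F _ 0 1 b a hd); [|exact: b0|exact: ltW|lra].
  move=> z /andP[bz za].
  have z0 : 0 < z by lra.
  have z1 : 0 < 1 - z by lra.
  have -> : - (a / z) + (1 - a) / (1 - z) + 4 * (a - z) = - ((a - z) * (1 - 2 * z) ^+ 2 / (z * (1 - z))).
    by field; rewrite ?gt_eqF.
  rewrite oppr_le0; apply: divr_ge0; [apply: mulr_ge0; [lra | exact: sqr_ge0] | apply: mulr_ge0; lra].
move: key; rewrite /F /K subrr expr0n /= mulr0 subr0 !mulrBr.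
lra.
Qed.
End H3.

Section H4.
Variable R : realType.

Lemma pinsker (X : finType) (p q : X -> R) (S : pred X) :
  (forall x, 0 <= p x) -> \sum_x p x = 1 -> (forall x, 0 <= q x) -> \sum_x q x = 1 ->
  (forall x, p x != 0 -> q x != 0) ->
  \sum_(x | S x) q x < \sum_(x | S x) p x ->
  2 * (\sum_(x | S x) p x - \sum_(x | S x) q x) ^+ 2
    <= \sum_(x | p x != 0) p x * ln (p x / q x).
Proof.
move=> p0 p1 q0 q1 sup lt.
have L1 := @logsum R X p q S p0 q0 sup.
have L2 := @logsum R X p q (fun x => ~~ S x) p0 q0 sup.
set a := \sum_(x | S x) p x in L1 lt *.
set b := \sum_(x | S x) q x in L1 lt *.
have ea : \sum_(x | ~~ S x) p x = 1 - a.
  by move: p1; rewrite (bigID S) /= => <-; rewrite addrC addrK.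
have eb : \sum_(x | ~~ S x) q x = 1 - b.
  by move: q1; rewrite (bigID S) /= => <-; rewrite addrC addrK.
rewrite ea eb in L2.
have b0 : 0 <= b by apply: sumr_ge0.
have nac : 0 <= 1 - a by rewrite -ea; apply: sumr_ge0.
have bpos : 0 < b.
  rewrite lt_neqAle b0 andbT; apply/negP => /eqP bz.
  have qz := psumr_eq0P (fun i _ => q0 i) (esym bz).
  have : a = 0.
    rewrite /a big1 // => x Sx; apply/eqP; apply/negP => /negP px.
    by have := sup x px; rewrite qz // eqxx.
  move=> az; rewrite az -bz in lt; by rewrite ltxx in lt.
have := @binpinsker R a b bpos lt ltac:(lra).
rewrite (bigID S) /=.
lra.
Qed.
End H4.

Section H5.
Variable R : realType.

Lemma fmin_le (X : finType) (A : {set X}) (f : X -> R) x :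
  x \in A -> fmin A f <= f x.
Proof.
move=> xA; rewrite /fmin; case: pickP => [x0 _|/(_ x)]; last by rewrite xA.
by rewrite (bigD1 x) //= ge_min lexx.
Qed.

Lemma fmin_mem (X : finType) (A : {set X}) (f : X -> R) :
  A != finset.set0 -> exists2 x, x \in A & fmin A f = f x.
Proof.
move=> /set0Pn[y yA]; rewrite /fmin; case: pickP => [x0 x0A|/(_ y)]; last by rewrite yA.
apply: (big_ind (fun v => exists2 x, x \in A & v = f x)).
- by exists x0.
- move=> u v [x1 x1A ->] [x2 x2A ->].
  have [h|h] := leP (f x1) (f x2).
    by exists x1 => //; rewrite min_l.
  by exists x2 => //; rewrite min_r // ltW.
- by move=> x xA; exists x.
Qed.
End H5.

Local Open Scope classical_set_scope.

Theorem theorem4p3 (R : realType) (n T mc md : nat)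
  (Inst : Type) (D : set Inst)
  (cc : Inst -> route n T -> 'rV[R]_mc) (dd : Inst -> route n T -> 'rV[R]_md)
  (f : Inst -> route n T -> R)
  (Theta : Type) (p : Theta -> Inst -> route n T -> R)
  (c : R) (thetastar : R -> Theta) :
  let C P := feasible (cc P) (dd P) in
  let q lam P := gibbs (C P) (f P) lam in
  let delta lam :=
    ereal_inf [set ereal_sup [set KL (p th P) (q lam P) | P in D] | th in setT] in
  (forall P, D P -> C P != finset.set0) ->
  (forall P, D P -> C P :\: optset (C P) (f P) != finset.set0) ->
  (forall th P, D P -> is_distr (p th P)) ->
  (forall lam, 0 < lam -> (delta lam <= (c / lam)%:E)%E) ->
  (forall lam, 0 < lam ->
     ereal_sup [set KL (p (thetastar lam) P) (q lam P) | P in D] = delta lam) ->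
  forall P, D P -> forall eps lam, 0 < eps -> 0 < lam -> lam <= gap (C P) (f P) ->
    let Delta := gap (C P) (f P) in
    \sum_(pi | f P pi >= fstar (C P) (f P) + eps) p (thetastar lam) P pi
    <= (#|C P|%:R * Delta * expR (- Delta / lam))
         / (#|optset (C P) (f P)|%:R * Num.max eps Delta)
       + Num.sqrt (c / (2 * lam)).
Proof.
move=> C q delta Cne Dne hdist hdelta hstar P DP eps lam eps0 lam0 lamD.
cbv zeta; set Delta := gap (C P) (f P).
set pp := p (thetastar lam) P.
set qq := q lam P.
set CP := C P.
set fP := f P.
set fs := fstar CP fP.
set opt := optset CP fP.
set Z := partfun CP fP lam.
set M := Num.max eps Delta.
set e := fun x => expR (- (fP x - fs) / lam).
have Dpos : 0 < Delta by apply: lt_le_trans lamD.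
have fsle : forall x, x \in CP -> fs <= fP x by move=> x xC; exact: fmin_le.
have [x0 x0C fx0] := @fmin_mem R _ CP fP (Cne P DP).
have x0opt : x0 \in opt by rewrite /opt /optset inE x0C /fs /fstar fx0 eqxx.
have gapE : forall x, x \in CP :\: opt -> fs + Delta <= fP x.
  move=> x xc; have := @fmin_le R _ _ fP x xc.
  by rewrite /Delta /gap -/CP -/fP -/fs -/opt; lra.
have Zopt : #|opt|%:R <= Z.
  rewrite /Z /partfun -/fs (bigID (fun x => x \in opt)) /=.
  have -> : \sum_(i in CP | i \in opt) expR (- (fP i - fs) / lam) = #|opt|%:R.
    rewrite (eq_bigr (fun=> 1)); last first.
      move=> i /andP[_]; rewrite /opt /optset inE => /andP[_ /eqP ->].
      by rewrite subrr oppr0 mul0r expR0.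
    rewrite (eq_bigl (fun i => i \in opt)); first by rewrite sumr_const.
    by move=> i; apply/andb_idl; rewrite /opt /optset => /setIdP[].
  by rewrite lerDl sumr_ge0 // => i _; exact: expR_ge0.
have optpos : 0 < #|opt|%:R :> R.
  by rewrite ltr0n card_gt0; apply/set0Pn; exists x0.
have Zpos : 0 < Z by apply: lt_le_trans Zopt.
have qqE : forall x, qq x = if x \in CP then e x / Z else 0 by [].
have qq0 : forall x, 0 <= qq x.
  by move=> x; rewrite qqE; case: ifP => // _; rewrite divr_ge0 ?expR_ge0 // ltW.
have qq1 : \sum_x qq x = 1.
  rewrite (eq_bigr _ (fun x _ => qqE x)) -big_mkcond /= -mulr_suml.
  by rewrite /Z /partfun mulfV // gt_eqF.
have tail : \sum_(pi | fs + eps <= fP pi) qq pi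
    <= (#|CP|%:R * Delta * expR (- Delta / lam)) / (#|opt|%:R * M).
  have Mge : forall x, x \in CP -> fs + eps <= fP x -> M <= fP x - fs.
    move=> x xC hx.
    have xnopt : x \in CP :\: opt.
      rewrite inE xC andbT; apply/negP; rewrite /opt /optset => /setIdP[_ /eqP h].
      rewrite -/fs in h; lra.
    have := gapE x xnopt; rewrite /M ge_max => h; apply/andP; split; lra.
  have DM : Delta <= M by rewrite /M le_max lexx orbT.
  have Mpos : 0 < M by apply: lt_le_trans DM.
  set E := expR (- M / lam).
  set g := fun x => if x \in CP then E / Z else 0.
  have hg : forall x, fs + eps <= fP x -> qq x <= g x.
    move=> x hx; rewrite qqE /g; case: ifP => xC //.
    rewrite ler_pM2r ?invr_gt0 // /e /E ler_expR ler_pM2r ?invr_gt0 //.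
    have := Mge x xC hx; lra.
  have g0 : forall x, 0 <= g x.
    by move=> x; rewrite /g; case: ifP => // _; rewrite divr_ge0 ?expR_ge0 // ltW.
  apply: (le_trans (ler_sum _ hg)).
  apply: (@le_trans _ _ (\sum_x g x)).
    rewrite [X in _ <= X](bigID (fun pi => fs + eps <= fP pi)) /=.
    by rewrite lerDl sumr_ge0.
  rewrite /g -big_mkcond /= sumr_const -[E / Z *+ _]mulr_natl.
  set N := #|CP|%:R; set O := #|opt|%:R; set X := expR (- Delta / lam).
  have N0 : 0 <= N :> R by rewrite /N ler0n.
  have kE : E * M <= Delta * X.
    have eE : E = X * expR (- ((M - Delta) / lam)).
      by rewrite /E /X -expRD; congr expR; field; rewrite gt_eqF.
    have h1 : M <= Delta * expR ((M - Delta) / lam).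
      have := expR_ge1Dx ((M - Delta) / lam).
      have h2 : (M - Delta) / Delta <= (M - Delta) / lam.
        by rewrite ler_wpM2l ?subr_ge0 // lef_pV2 ?posrE.
      have h3 : Delta * (1 + (M - Delta) / Delta) = M by field; rewrite gt_eqF.
      move=> h4; rewrite -{1}h3; apply: ler_wpM2l; [exact: ltW | lra].
    have h5 : expR (- ((M - Delta) / lam)) * M <= Delta.
      apply: (le_trans (ler_wpM2l (expR_ge0 _) h1)).
      by rewrite mulrCA -expRD addNr expR0 mulr1.
    by rewrite eE -mulrA mulrC ler_wpM2r ?expR_ge0.
  have -> : N * Delta * X / (O * M) = N * ((Delta * X) / (O * M)) by rewrite !mulrA.
  rewrite ler_wpM2l //.
  apply: (@le_trans _ _ (E / O)).
    by rewrite ler_wpM2l ?expR_ge0 // lef_pV2 ?posrE.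
  have -> : E / O = (E * M) / (O * M) by field; rewrite !gt_eqF.
  by rewrite ler_pM2r ?invr_gt0 ?mulr_gt0.
have [pp0 pp1] := hdist (thetastar lam) P DP.
have KLle : (KL pp qq <= (c / lam)%:E)%E.
  apply: le_trans (hdelta lam lam0); rewrite -hstar //.
  by apply: ereal_sup_ubound; exists P.
move: KLle; rewrite /KL; case: ifP => [/forallP sup | _]; last by rewrite leye_eq.
rewrite lee_fin => KLle.
have supp : forall x, pp x != 0 -> qq x != 0 by move=> x; apply/implyP; exact: sup.
set a := \sum_(pi | fs + eps <= fP pi) pp pi.
set b := \sum_(pi | fs + eps <= fP pi) qq pi in tail.
suff : a - b <= Num.sqrt (c / (2 * lam)) by lra.
have [ba|ab] := ltP b a; last first.
  by apply: le_trans (sqrtr_ge0 _); lra.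
have := @pinsker R _ pp qq (fun pi => fs + eps <= fP pi) pp0 pp1 qq0 qq1 supp ba.
rewrite -/a -/b => hp.
have hsq : (a - b) ^+ 2 <= c / (2 * lam).
  rewrite invfM mulrCA ler_pdivlMl //; lra.
rewrite -(@ger0_norm _ (a - b)); last lra.
rewrite -sqrtr_sqr ler_sqrt //; apply: le_trans hsq; exact: sqr_ge0.
Qed.
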